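(* For positive integers $m\le k\le n$, define $$g(m,n,k)=\max_y\Big\{\sum_{\tau=0}^{m}\frac{\binom{n-m}{k-\tau}}{(n-m)^{m-\tau}\binom{n-m}{k-m}}\cdot\frac{\binom{m}{\tau}}{m^{\tau}}(k-y)^{m-\tau}y^{\tau}:\ \frac{mk}{n}\le y\le m\Big\}.$$ Then for any $n\ge k\ge m$, $$[g(m,n,k)]^{1/m}\le \lim_{t\to\infty}[g(m,t,k)]^{1/m}\le \min\Big\{e,\ 1+\frac{k}{k-m+1}\Big\}.$$
   Context: Binomial coefficients $\binom{a}{b}$ are $0$ when $b>a$ or $b<0$; the limit is over integers $t\to\infty$. *)

(* Defs.v *)
From HB Require Import structures.
From mathcomp Require Import all_boot all_order all_algebra.
From mathcomp Require Import all_classical all_reals all_analysis.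
Set Implicit Arguments. Unset Strict Implicit. Unset Printing Implicit Defensive.
Import Order.TTheory GRing.Theory Num.Theory.
Local Open Scope ring_scope.
Local Open Scope classical_set_scope.

(* Binomial coefficients are natural numbers ('C(a,b) = 0 when b > a);
   nat subtractions k - tau, n - m, m - tau are never truncated here since
   tau <= m <= k <= n. Division by zero follows MathComp's convention x/0 = 0
   (relevant only in the degenerate case n = m). *)
Definition gsum (R : realType) (m n k : nat) (y : R) : R :=
  \sum_(0 <= tau < m.+1)
     ('C(n - m, k - tau)%:R / ((n - m)%:R ^+ (m - tau) * 'C(n - m, k - m)%:R))
     * ('C(m, tau)%:R / m%:R ^+ tau)
     * (k%:R - y) ^+ (m - tau) * y ^+ tau.

(* g(m,n,k) = max { gsum y : mk/n <= y <= m }; the max is attained (continuous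
   function on a nonempty compact interval), so it equals the supremum. *)
Definition g (R : realType) (m n k : nat) : R :=
  sup [set gsum m n k y | y in [set y : R | (m * k)%:R / n%:R <= y <= m%:R]].

(* Main.v *)
Require Import Defs.
From HB Require Import structures.
From mathcomp Require Import all_boot all_order all_algebra.
From mathcomp Require Import all_classical all_reals all_analysis.
From mathcomp Require Import zify ring lra.
Import Order.TTheory GRing.Theory Num.Theory numFieldNormedType.Exports.
Local Open Scope ring_scope.
Local Open Scope classical_set_scope.

Lemma ffactD (N a j : nat) : (N ^_ (a + j) = N ^_ a * (N - a) ^_ j)%N.
Proof.
elim: j => [|j IH]; first by rewrite addn0 ffactn0 muln1.
by rewrite addnS !ffactnSr IH subnDA mulnA.
Qed.

Lemma ffact_le_exp (x j : nat) : (x ^_ j <= x ^ j)%N.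
Proof.
elim: j => [|j IH] //; rewrite ffactnSr expnSr; exact: leq_mul IH (leq_subr _ _).
Qed.

Lemma ffact_mono (a N N' j : nat) : (a <= N)%N -> (N <= N')%N ->
  ((N - a) ^_ j * N' ^ j <= (N' - a) ^_ j * N ^ j)%N.
Proof.
move=> haN hNN'; elim: j => [|j IH]; first by rewrite !muln1.
rewrite !ffactnSr !expnSr mulnACA [X in (_ <= X)%N]mulnACA.
apply: leq_mul => //.
case: (leqP N (a + j)) => h.
  have -> : (N - a - j = 0)%N by lia.
  by rewrite mul0n.
nia.
Qed.

Lemma fact_exp_le (a j : nat) : (a`! * (a + 1) ^ j <= (a + j)`!)%N.
Proof.
elim: j => [|j IH]; first by rewrite expn0 muln1 addn0.
rewrite expnSr (addnS a j) factS mulnA mulnC.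
apply: leq_mul => //; lia.
Qed.

Section Reals.
Variable R : realType.

Definition Dc (a j : nat) : R := (a`!)%:R / ((a + j)`!)%:R.
Definition rr (a N j : nat) : R := ((N - a) ^_ j)%:R / (N%:R ^+ j).

Lemma Dc_ge0 a j : 0 <= Dc a j.
Proof. by rewrite /Dc divr_ge0 // ler0n. Qed.

Lemma Dc0 a : Dc a 0 = 1.
Proof. by rewrite /Dc addn0 divff // pnatr_eq0 -lt0n fact_gt0. Qed.

Lemma DcS a j : Dc a j.+1 = Dc a j / (a + j).+1%:R.
Proof. rewrite /Dc addnS factS natrM invfM; ring. Qed.

Lemma Dc_le a j : Dc a j <= ((a + 1)%:R ^+ j)^-1.
Proof.
rewrite /Dc ler_pdivrMr ?ltr0n ?fact_gt0 // mulrC -/(_ / _).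
rewrite ler_pdivlMr ?exprn_gt0 ?ltr0n ?addn1 //.
by rewrite -natrX -natrM ler_nat -addn1 fact_exp_le.
Qed.

Lemma rr_ge0 a N j : 0 <= rr a N j.
Proof. by rewrite /rr divr_ge0 // exprn_ge0. Qed.

Lemma rr_le1 a N j : rr a N j <= 1.
Proof.
rewrite /rr; have [->|hN] := eqVneq (N%:R ^+ j : R) 0.
  by rewrite invr0 mulr0.
have hp : 0 < (N%:R ^+ j : R) by rewrite lt_def hN exprn_ge0.
rewrite ler_pdivrMr // mul1r -natrX ler_nat.
apply: leq_trans (ffact_le_exp _ _) _.
elim: j {hN hp} => [|j IH] //; rewrite !expnSr; apply: leq_mul IH (leq_subr _ _).
Qed.

Lemma rr_mono a N N' j : (a <= N)%N -> (N <= N')%N -> rr a N j <= rr a N' j.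
Proof.
move=> haN hNN'; rewrite /rr.
case: (posnP N) => [N0|Npos].
  case: j => [|j]; first by rewrite !ffactn0 !expr0 divr1.
  subst N; have -> : a = 0%N by lia.
  by rewrite sub0n ffact0n /= mul0r divr_ge0 // exprn_ge0.
have hp : 0 < (N%:R ^+ j : R) by rewrite exprn_gt0 // ltr0n.
have hp' : 0 < (N'%:R ^+ j : R) by rewrite exprn_gt0 // ltr0n; lia.
rewrite ler_pdivrMr // mulrAC ler_pdivlMr //.
by rewrite -!natrX -!natrM ler_nat ffact_mono.
Qed.

Lemma coefE_rr (a N j : nat) : (a <= N)%N ->
  'C(N, a + j)%:R / (N%:R ^+ j * 'C(N, a)%:R) = rr a N j * Dc a j :> R.
Proof.
move=> haN.
have hC1 : 'C(N, a + j)%:R = (N ^_ a * (N - a) ^_ j)%:R / ((a + j)`!)%:R :> R.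
  rewrite -ffactD -bin_ffact natrM mulfK // pnatr_eq0 -lt0n fact_gt0 //.
have hC2 : 'C(N, a)%:R = (N ^_ a)%:R / (a`!)%:R :> R.
  rewrite -bin_ffact natrM mulfK // pnatr_eq0 -lt0n fact_gt0 //.
have hf : (N ^_ a)%:R != 0 :> R by rewrite pnatr_eq0 -lt0n ffact_gt0.
have hfa : (a`!)%:R != 0 :> R by rewrite pnatr_eq0 -lt0n fact_gt0.
have hfaj : ((a + j)`!)%:R != 0 :> R by rewrite pnatr_eq0 -lt0n fact_gt0.
rewrite /rr /Dc hC1 hC2 natrM.
have [->|hN] := eqVneq (N%:R ^+ j : R) 0.
  by rewrite !mul0r invr0 !mulr0 mul0r.
by field; rewrite hN hf hfa hfaj.
Qed.

Lemma De_bound (a j : nat) (s : R) : 0 <= s ->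
  ((a%:R + s) ^+ j * Dc a j <= expR s) /\
  (j%:R <= s -> (a%:R + s) ^+ j * Dc a j <= s ^+ j / (j`!)%:R).
Proof.
move=> s0; elim: j => [|j [IH1 IH2]].
  rewrite Dc0 !expr0 mulr1 fact0 divr1; split => //.
  by apply: le_trans (expR_ge1Dx s); rewrite lerDl.
have hF0 : 0 <= (a%:R + s) ^+ j * Dc a j.
  by rewrite mulr_ge0 ?Dc_ge0 // exprn_ge0 // addr_ge0.
have hd : 0 < (a + j).+1%:R :> R by rewrite ltr0n.
have eq1 : (a%:R + s) ^+ j.+1 * Dc a j.+1 =
    (a%:R + s) ^+ j * Dc a j * ((a%:R + s) / (a + j).+1%:R).
  by rewrite exprSr DcS; rewrite mulrA; ring.
have hsf : 0 <= s ^+ j.+1 / (j.+1`!)%:R.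
  by rewrite divr_ge0 // exprn_ge0.
have key : j.+1%:R <= s -> (a%:R + s) ^+ j.+1 * Dc a j.+1 <= s ^+ j.+1 / (j.+1`!)%:R.
  move=> hs; rewrite eq1.
  have hjs : j%:R <= s by apply: le_trans hs; rewrite ler_nat.
  apply: (le_trans (y := s ^+ j / (j`!)%:R * (s / j.+1%:R))).
    apply: ler_pM => //; first by rewrite divr_ge0 // addr_ge0.
      exact: IH2.
    rewrite ler_pdivrMr // mulrAC ler_pdivlMr ?ltr0n //.
    rewrite -!natr1 ?natrD in hs *.
    have ha : 0 <= a%:R :> R by rewrite ler0n.
    rewrite -subr_ge0.
    have -> : s * (a%:R + j%:R + 1) - (a%:R + s) * (j%:R + 1) = a%:R * (s - (j%:R + 1)) by ring.
    by rewrite mulr_ge0 // subr_ge0.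
  suff -> : s ^+ j.+1 / (j.+1`!)%:R = s ^+ j / (j`!)%:R * (s / j.+1%:R) by [].
  rewrite factS natrM exprSr; field.
  by rewrite nat1r !pnatr_eq0 -!lt0n fact_gt0.
split.
  have [hs|hs] := leP (j.+1%:R) s.
    apply: le_trans (key hs) _.
    apply: le_trans (expR_ge1Dxn j s0); lra.
  rewrite eq1; apply: le_trans IH1; rewrite -[X in _ <= X]mulr1.
  apply: ler_wpM2l => //; rewrite ler_pdivrMr // mul1r.
  rewrite -!natr1 ?natrD in hs *; lra.
exact: key.
Qed.

End Reals.


Section G.
Variable R : realType.
Variables (m k : nat).
Hypotheses (m0 : (0 < m)%N) (mk : (m <= k)%N).

Definition hsum (y : R) : R :=
  \sum_(0 <= tau < m.+1)
     Dc R (k - m) (m - tau) * ('C(m, tau)%:R / m%:R ^+ tau)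
     * (k%:R - y) ^+ (m - tau) * y ^+ tau.

Lemma coefE' (t tau : nat) : (tau <= m)%N -> (k <= t)%N ->
  'C(t - m, k - tau)%:R / ((t - m)%:R ^+ (m - tau) * 'C(t - m, k - m)%:R)
  = rr R (k - m) (t - m) (m - tau) * Dc R (k - m) (m - tau).
Proof.
move=> htm hkt; rewrite (_ : (k - tau = (k - m) + (m - tau))%N); last by lia.
apply: coefE_rr; lia.
Qed.

Lemma rest_ge0 (y : R) (tau : nat) : 0 <= y <= m%:R ->
  0 <= ('C(m, tau)%:R / m%:R ^+ tau) * (k%:R - y) ^+ (m - tau) * y ^+ tau.
Proof.
move=> /andP[y0 ym].
have hky : 0 <= k%:R - y.
  by rewrite subr_ge0; apply: le_trans ym _; rewrite ler_nat.
by rewrite !mulr_ge0 ?divr_ge0 ?exprn_ge0.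
Qed.

Lemma term_le (c c' y : R) (tau : nat) : 0 <= y <= m%:R -> c <= c' ->
  c * ('C(m, tau)%:R / m%:R ^+ tau) * (k%:R - y) ^+ (m - tau) * y ^+ tau <=
  c' * ('C(m, tau)%:R / m%:R ^+ tau) * (k%:R - y) ^+ (m - tau) * y ^+ tau.
Proof.
move=> hy hc; have H := ler_wpM2r (rest_ge0 y tau hy) hc.
by move: H; rewrite !mulrA.
Qed.

Lemma term_ge0 (c y : R) (tau : nat) : 0 <= y <= m%:R -> 0 <= c ->
  0 <= c * ('C(m, tau)%:R / m%:R ^+ tau) * (k%:R - y) ^+ (m - tau) * y ^+ tau.
Proof.
move=> hy hc; have H := mulr_ge0 hc (rest_ge0 y tau hy).
by move: H; rewrite !mulrA.
Qed.

Lemma gsum_le_h (t : nat) (y : R) : (k <= t)%N -> 0 <= y <= m%:R ->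
  gsum m t k y <= hsum y.
Proof.
move=> hkt hy; rewrite /gsum /hsum !big_mkord; apply: ler_sum => i _.
have hi : (i <= m)%N by rewrite -ltnS ltn_ord.
rewrite coefE' //; apply: term_le => //.
by apply: ler_piMl; [exact: Dc_ge0|exact: rr_le1].
Qed.

Lemma gsum_mono (t t' : nat) (y : R) : (k <= t)%N -> (t <= t')%N -> 0 <= y <= m%:R ->
  gsum m t k y <= gsum m t' k y.
Proof.
move=> hkt htt hy; rewrite /gsum !big_mkord; apply: ler_sum => i _.
have hi : (i <= m)%N by rewrite -ltnS ltn_ord.
rewrite !coefE' //; last by lia.
apply: term_le => //; apply: ler_wpM2r; first exact: Dc_ge0.
apply: rr_mono; lia.
Qed.

Lemma gsum_ge0 (t : nat) (y : R) : (k <= t)%N -> 0 <= y <= m%:R ->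
  0 <= gsum m t k y.
Proof.
move=> hkt hy; rewrite /gsum big_mkord; apply: sumr_ge0 => i _.
have hi : (i <= m)%N by rewrite -ltnS ltn_ord.
rewrite coefE' //; apply: term_ge0 => //.
by apply: mulr_ge0; [exact: rr_ge0|exact: Dc_ge0].
Qed.

Lemma hsum_le1 (y : R) : 0 <= y <= m%:R ->
  hsum y <= (1 + k%:R / (k - m + 1)%:R) ^+ m.
Proof.
move=> hy; have /andP[y0 ym] := hy.
have hm : 0 < m%:R :> R by rewrite ltr0n.
have ha : 0 < (k - m + 1)%:R :> R by rewrite ltr0n addn1.
have hky : 0 <= k%:R - y.
  by rewrite subr_ge0; apply: le_trans ym _; rewrite ler_nat.
apply: (le_trans (y := ((k%:R - y) / (k - m + 1)%:R + y / m%:R) ^+ m)).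
  rewrite exprDn /hsum big_mkord; apply: ler_sum => i _.
  have H := term_le _ _ _ i hy (Dc_le R (k - m) (m - i)).
  apply: (le_trans H); rewrite le_eqVlt; apply/orP; left; apply/eqP.
  rewrite -mulr_natl !expr_div_n; ring.
apply: lerXn2r.
- by rewrite nnegrE addr_ge0 // divr_ge0 // ltW.
- by rewrite nnegrE addr_ge0 // divr_ge0 // ltW.
rewrite addrC lerD //.
  by rewrite ler_pdivrMr // mul1r.
by rewrite ler_pM2r ?invr_gt0 // lerBlDr lerDl.
Qed.

Lemma hsum_le2 (y : R) : 0 <= y <= m%:R -> hsum y <= expR 1 ^+ m.
Proof.
move=> hy; have /andP[y0 ym] := hy.
have hm : 0 < m%:R :> R by rewrite ltr0n.
apply: (le_trans (y := expR (m%:R - y) * (1 + y / m%:R) ^+ m)).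
  rewrite exprDn /hsum big_mkord mulr_sumr; apply: ler_sum => i _.
  rewrite expr1n mul1r -mulr_natl expr_div_n.
  rewrite [X in _ <= X](_ : _ = expR (m%:R - y) *
     ('C(m, i)%:R / m%:R ^+ i * y ^+ i)); last by ring.
  rewrite [X in X <= _](_ : _ = (k%:R - y) ^+ (m - i) * Dc R (k - m) (m - i) *
     ('C(m, i)%:R / m%:R ^+ i * y ^+ i)); last by ring.
  apply: ler_wpM2r; first by rewrite mulr_ge0 ?divr_ge0 ?exprn_ge0.
  have [H _] := De_bound R (k - m) (m - i) (m%:R - y) (ltac:(by rewrite subr_ge0)).
  by move: H; rewrite natrB // addrA subrK.
rewrite -expRM_natl mulr1.
have -> : expR (m%:R : R) = expR (m%:R - y) * expR (y / m%:R) ^+ m.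
  rewrite -expRM_natl (_ : m%:R * (y / m%:R) = y); last by rewrite mulrC divfK ?gt_eqF.
  by rewrite -expRD subrK.
apply: ler_wpM2l; first exact: expR_ge0.
apply: lerXn2r.
- by rewrite nnegrE addr_ge0 // divr_ge0 // ltW.
- by rewrite nnegrE expR_ge0.
by rewrite addrC; apply: le_trans (expR_ge1Dx _); rewrite addrC.
Qed.

End G.

Arguments gsum_le_h {R m k} m0 mk {t y}.
Arguments gsum_ge0 {R m k} m0 mk {t y}.
Arguments gsum_mono {R m k} m0 mk {t t' y}.
Arguments hsum_le1 {R m k} m0 mk {y}.
Arguments hsum_le2 {R m k} m0 mk {y}.


Section Main.
Variable R : realType.
Variables (m k : nat).
Hypotheses (m0 : (0 < m)%N) (mk : (m <= k)%N).

Let B : R := Num.min (expR 1) (1 + k%:R / (k - m + 1)%:R).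
Let dom (t : nat) := [set y : R | (m * k)%:R / t%:R <= y <= m%:R].

Lemma B_ge0 : 0 <= B.
Proof.
rewrite /B /Num.min; case: ifP => _; first exact: expR_ge0.
by rewrite addr_ge0 // divr_ge0.
Qed.

Lemma dom_01 t y : dom t y -> 0 <= y <= m%:R.
Proof.
move=> /andP[h1 h2]; rewrite h2 andbT; apply: le_trans h1.
by rewrite divr_ge0.
Qed.
Arguments dom_01 {t y}.

Lemma dom_m t : (k <= t)%N -> dom t m%:R.
Proof.
move=> hkt; rewrite /dom /= lexx andbT.
have ht : 0 < t%:R :> R by rewrite ltr0n; lia.
rewrite ler_pdivrMr // -natrM ler_nat; exact: leq_mul.
Qed.
Arguments dom_m {t}.

Lemma dom_mono t t' : (k <= t)%N -> (t <= t')%N -> dom t `<=` dom t'.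
Proof.
move=> hkt htt y /andP[h1 h2]; rewrite /dom /= h2 andbT; apply: le_trans h1.
apply: ler_wpM2l => //; rewrite lef_pV2 ?posrE ?ltr0n ?ler_nat //; lia.
Qed.

Lemma gsum_B t y : (k <= t)%N -> dom t y -> gsum m t k y <= B ^+ m.
Proof.
move=> hkt hy; have h01 := dom_01 hy.
have H := gsum_le_h m0 mk hkt h01.
have H1 := le_trans H (hsum_le1 m0 mk h01).
have H2 := le_trans H (hsum_le2 m0 mk h01).
by rewrite /B /Num.min; case: ifP.
Qed.

Let S t := [set gsum m t k y | y in dom t].

Lemma S_ub t : (k <= t)%N -> ubound (S t) (B ^+ m).
Proof. by move=> hkt x [y hy <-]; exact: gsum_B. Qed.

Lemma S_sup t : (k <= t)%N -> has_sup (S t).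
Proof.
move=> hkt; split; first by exists (gsum m t k m%:R), m%:R => //; exact: dom_m.
by exists (B ^+ m); exact: S_ub.
Qed.

Lemma g_ge0 t : (k <= t)%N -> 0 <= g R m t k.
Proof.
move=> hkt; rewrite /g.
apply: (le_trans (gsum_ge0 m0 mk hkt (dom_01 (dom_m hkt)))).
apply: ub_le_sup; first by case: (S_sup _ hkt).
by exists m%:R => //; exact: dom_m.
Qed.

Lemma g_ub t : (k <= t)%N -> g R m t k <= B ^+ m.
Proof.
move=> hkt; rewrite /g; apply: ge_sup; first by case: (S_sup _ hkt).
exact: S_ub.
Qed.

Lemma g_mono t t' : (k <= t)%N -> (t <= t')%N -> g R m t k <= g R m t' k.
Proof.
move=> hkt htt; rewrite /g; apply: sup_le; last first.
- apply: S_sup; lia.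
- by case: (S_sup _ hkt).
move=> x [y hy <-]; exists (gsum m t' k y); split.
  by exists y => //; exact: (dom_mono _ _ hkt htt _ hy).
apply: (gsum_mono m0 mk) => //; exact: dom_01 hy.
Qed.

Let s t := g R m t k `^ (m%:R)^-1.

Lemma s_mono t t' : (k <= t)%N -> (t <= t')%N -> s t <= s t'.
Proof.
move=> hkt htt; apply: ge0_ler_powR; rewrite ?invr_ge0 ?ler0n ?nnegrE ?g_ge0 //.
  lia.
exact: g_mono.
Qed.

Lemma s_ub t : (k <= t)%N -> s t <= B.
Proof.
move=> hkt.
have H : s t <= (B ^+ m) `^ (m%:R)^-1.
  apply: ge0_ler_powR; rewrite ?invr_ge0 ?ler0n ?nnegrE ?g_ge0 ?exprn_ge0 ?B_ge0 //.
  exact: g_ub.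
apply: (le_trans H); rewrite -powR_mulrn ?B_ge0 // -powRrM mulfV ?powRr1 ?B_ge0 //.
by rewrite pnatr_eq0 -lt0n.
Qed.

Lemma main_res (n : nat) : (k <= n)%N ->
  exists L : R,
    ((fun t : nat => g R m t k `^ (m%:R)^-1) @ \oo --> (L : R)) /\
    g R m n k `^ (m%:R)^-1 <= L /\
    L <= B.
Proof.
move=> hkn.
pose u := fun i : nat => s (i + n)%N.
have umono : nondecreasing_seq u.
  move=> i j hij; apply: s_mono; lia.
have uub : has_ubound (range u).
  by exists B => _ [i _ <-]; apply: s_ub; lia.
exists (sup (range u)); split.
  rewrite -(cvg_shiftn n); exact: nondecreasing_cvgn.
split.
  have -> : g R m n k `^ (m%:R)^-1 = u 0%N by [].
  by apply: ub_le_sup => //; exists 0%N.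
apply: ge_sup; first by exists (u 0%N), 0%N.
by move=> _ [i _ <-]; apply: s_ub; lia.
Qed.

End Main.


Theorem proposition2 (R : realType) (m k n : nat) :
  (0 < m)%N -> (m <= k)%N -> (k <= n)%N ->
  exists L : R,
    ((fun t : nat => g R m t k `^ (m%:R)^-1) @ \oo --> (L : R)) /\
    g R m n k `^ (m%:R)^-1 <= L /\
    L <= Num.min (expR 1) (1 + k%:R / (k - m + 1)%:R).
Proof.
move=> m0 mk kn; exact: (@main_res R m k m0 mk n kn).
Qed.
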